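(* Let $\lambda\in\mathbf{R}$ and $c>0$. Then there exists an integer $l\geq 0$ such that for every $f\in\mathcal{C}^{\lambda\text{-an}}(\mathbf{Z}_p^d,M)$ and every $1\leq i\leq d$ we have $\Delta_{p^l1_i}(f)\in\mathcal{C}^{\lambda\text{-an}}(\mathbf{Z}_p^d,M)$ and $$\mathrm{val}_{\lambda}(\Delta_{p^l 1_i}(f))\geq \mathrm{val}_{\lambda}(f)+c.$$
   Context: A valuation on a ring (or module) is a map $\mathrm{val}$ to $(-\infty,\infty]$ with $\mathrm{val}(x)=\infty$ iff $x=0$, $\mathrm{val}(xy)\geq\mathrm{val}(x)+\mathrm{val}(y)$ (for modules: $\mathrm{val}(rm)\geq \mathrm{val}(r)+\mathrm{val}(m)$) and $\mathrm{val}(x+y)\geq\min(\mathrm{val}(x),\mathrm{val}(y))$. Let $R$ be a $\mathbf{Z}_p$-algebra which is a Tate ring with a valuation $\mathrm{val}_R$ such that $\mathrm{val}_R(p)>0$, and let $M$ be an $R$-module with a compatible valuation $\mathrm{val}_M$. For $\underline{y}\in\mathbf{Z}_p^d$ and $f:\mathbf{Z}_p^d\to M$ put $\Delta_{\underline{y}}(f)(\underline{x})=f(\underline{x}+\underline{y})-f(\underline{x})$. Let $1_i\in\mathbf{Z}_p^d$ be the $i$-th standard basis vector, $\Delta_i=\Delta_{1_i}$, and for $\underline{n}\in\mathbf{Z}_{\geq0}^d$ put $\Delta^{\underline{n}}=\Delta_1^{n_1}\circ\cdots\circ\Delta_d^{n_d}$ and $a_{\underline{n}}(f)=\Delta^{\underline{n}}(f)(\underline{0})$.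 Write $|\underline{n}|=\sum_i n_i$ and $\lfloor p^\lambda\underline{n}\rfloor=\sum_i\lfloor p^\lambda n_i\rfloor$. Let $\mathcal{C}^{\lambda\text{-an}}(\mathbf{Z}_p^d,M)$ be the set of continuous $f:\mathbf{Z}_p^d\to M$ such that $\mathrm{val}_M(a_{\underline{n}}(f))-p^\lambda|\underline{n}|\to\infty$ as $|\underline{n}|\to\infty$, endowed with the valuation $\mathrm{val}_\lambda(f)=\inf_{\underline{n}}\big(\mathrm{val}_M(a_{\underline{n}}(f))-\lfloor p^\lambda\underline{n}\rfloor\big)$. *)

(* Defs.v *)
From HB Require Import structures.
From mathcomp Require Import all_boot all_order all_algebra.
From mathcomp Require Import all_classical all_reals all_analysis.
From mathcomp Require Import Rstruct.
Local Notation R := Rdefinitions.R.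
Set Implicit Arguments. Unset Strict Implicit. Unset Printing Implicit Defensive.
Import Order.TTheory GRing.Theory Num.Theory.
Local Open Scope ring_scope.

(* An element of Z_p is a sequence (a_k)_k with a_k in {0,..,p^k-1}
   representing its reduction mod p^k, compatible: a_{k+1} mod p^k = a_k.
   (For p > 0 the compatibility forces a_k < p^k and a_0 = 0.) *)
Definition Zp (p : nat) := {a : nat -> nat | forall k, (a k.+1 %% p ^ k = a k)%N}.

Definition zp_trunc (p : nat) (x : Zp p) (k : nat) : nat := proj1_sig x k.

Lemma zp_add_compat (p : nat) (x y : Zp p) :
  forall k, (((zp_trunc x k.+1 + zp_trunc y k.+1) %% p ^ k.+1) %% p ^ k)%N
            = ((zp_trunc x k + zp_trunc y k) %% p ^ k)%N.
Proof.
move=> k; case: x y => [a Ha] [b Hb] /=.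
rewrite modn_dvdm; last by rewrite dvdn_exp2l.
by rewrite -modnDm Ha Hb.
Qed.

Definition zp_add (p : nat) (x y : Zp p) : Zp p :=
  exist _ (fun k => ((zp_trunc x k + zp_trunc y k) %% p ^ k)%N) (zp_add_compat x y).

Lemma zp_of_nat_compat (p n : nat) : forall k, ((n %% p ^ k.+1) %% p ^ k)%N = (n %% p ^ k)%N.
Proof. by move=> k; rewrite modn_dvdm // dvdn_exp2l. Qed.

Definition zp_of_nat (p n : nat) : Zp p := exist _ (fun k => (n %% p ^ k)%N) (zp_of_nat_compat p n).

Arguments zp_of_nat : clear implicits.

Definition Zpd (p d : nat) := 'I_d -> Zp p.

Definition zpd_add (p d : nat) (x y : Zpd p d) : Zpd p d := fun j => zp_add (x j) (y j).

Definition zpd0 (p d : nat) : Zpd p d := fun _ => zp_of_nat p 0.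

Arguments zpd0 : clear implicits.

Definition zpd_basis (p d : nat) (i : 'I_d) (n : nat) : Zpd p d :=
  fun j => if j == i then zp_of_nat p n else zp_of_nat p 0.

Arguments zpd_basis p {d} i n.

Local Open Scope ereal_scope.

Definition ring_valuation (A : comNzRingType) (v : A -> \bar R) : Prop :=
  [/\ forall x, v x = +oo <-> x = 0%R,
      forall x, v x != -oo,
      forall x y, v x + v y <= v (x * y)%R
    & forall x y, mine (v x) (v y) <= v (x + y)%R].

Definition module_valuation (A : comNzRingType) (M : lmodType A)
  (vA : A -> \bar R) (vM : M -> \bar R) : Prop :=
  [/\ forall m, vM m = +oo <-> m = 0%R,
      forall m, vM m != -oo,
      forall r m, vA r + vM m <= vM (r *: m)%R
    & forall m n, mine (vM m) (vM n) <= vM (m + n)%R].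

Section Mahler.
Variables (p d : nat) (A : comNzRingType) (M : lmodType A).

Definition Delta (y : Zpd p d) (f : Zpd p d -> M) : Zpd p d -> M :=
  fun x => (f (zpd_add x y) - f x)%R.

Definition Delta_i (i : 'I_d) := Delta (zpd_basis p i 1).

Definition Delta_pow (n : 'I_d -> nat) (f : Zpd p d -> M) : Zpd p d -> M :=
  foldr (fun i g => iter (n i) (Delta_i i) \o g) id (enum 'I_d) f.

Definition mahler (f : Zpd p d -> M) (n : 'I_d -> nat) : M :=
  Delta_pow n f (zpd0 p d).

Definition nsize (n : 'I_d -> nat) : nat := (\sum_(i : 'I_d) n i)%N.

Variable vM : M -> \bar R.

(* continuity for the p-adic (product) topology on Z_p^d and the valuation
   topology on M *)
Definition zp_continuous (f : Zpd p d -> M) : Prop :=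
  forall (x : Zpd p d) (C : R), exists k : nat, forall y : Zpd p d,
    (forall j, zp_trunc (y j) k = zp_trunc (x j) k) ->
    (C%:E <= vM (f y - f x)%R).

Definition lam_an (lam : R) (f : Zpd p d -> M) : Prop :=
  zp_continuous f /\
  forall C : R, exists N : nat, forall n : 'I_d -> nat, (N <= nsize n)%N ->
    C%:E <= vM (mahler f n) - (((p%:R : R) `^ lam) * (nsize n)%:R)%:E.

(* floor(p^lambda n) = sum_i floor(p^lambda n_i) *)
Definition floor_sum (lam : R) (n : 'I_d -> nat) : R :=
  (\sum_(i : 'I_d) (Num.floor (((p%:R : R) `^ lam) * (n i)%:R))%:~R)%R.

Definition val_lam (lam : R) (f : Zpd p d -> M) : \bar R :=
  ereal_inf [set vM (mahler f n) - (floor_sum lam n)%:E | n in [set: 'I_d -> nat]].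

End Mahler.

(* Main.v *)
From Pilot Require Import Defs.
From HB Require Import structures.
From mathcomp Require Import all_boot all_order all_algebra.
From mathcomp Require Import all_classical all_reals all_analysis.
From mathcomp Require Import Rstruct.
From mathcomp Require Import zify ring lra.
Local Notation R := Rdefinitions.R.
Import Order.TTheory GRing.Theory Num.Theory.
Local Open Scope ring_scope.
Local Notation ZP := Pilot.Defs.Zp.

Lemma zp_ext (p : nat) (x y : ZP p) :
  (forall k, zp_trunc x k = zp_trunc y k) -> x = y.
Proof.
case: x y => [a Ha] [b Hb] /= H.
have E : a = b by apply: funext.
subst b; congr exist; exact: Prop_irrelevance.
Qed.

Lemma zp_trunc_lt (p : nat) (x : ZP p) k : (0 < p)%N -> (zp_trunc x k < p ^ k)%N.
Proof.
move=> p0; case: x => [a Ha] /=; rewrite -Ha ltn_mod expn_gt0 p0 //.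
Qed.

Lemma zp_trunc_le (p : nat) (x : ZP p) k1 k : (k1 <= k)%N ->
  (zp_trunc x k %% p ^ k1)%N = zp_trunc x k1.
Proof.
move/subnKC => <-; case: x => [a Ha] /=; elim: (k - k1)%N => [|j IH].
  by rewrite addn0 -(Ha k1) modn_dvdm // dvdn_exp2l.
by rewrite addnS -IH -[in RHS](Ha (k1 + j)%N) modn_dvdm //; apply: dvdn_exp2l; apply: leq_addr.
Qed.

Lemma zp_addA3 (p : nat) (x y z : ZP p) :
  zp_add (zp_add x y) z = zp_add (zp_add x z) y.
Proof.
apply: zp_ext => k /=; rewrite /zp_trunc /=.
by rewrite !modnDml -!addnA [(_ y k + _)%N]addnC.
Qed.

Lemma zp_add_nat (p : nat) (x : ZP p) a b :
  zp_add (zp_add x (zp_of_nat p a)) (zp_of_nat p b) = zp_add x (zp_of_nat p (a + b)).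
Proof.
apply: zp_ext => k /=; rewrite /zp_trunc /=.
rewrite modnDmr [in LHS]modnDml -[in LHS]addnA [(zp_trunc x k + _)%N]addnC -addnA modnDml.
by rewrite [in RHS]modnDmr (addnC (sval x k)) addnA.
Qed.

Lemma zp_add0 (p : nat) (x : ZP p) : (0 < p)%N -> zp_add x (zp_of_nat p 0) = x.
Proof.
move=> p0; apply: zp_ext => k /=; rewrite /zp_trunc /= mod0n addn0 modn_small //.
exact: zp_trunc_lt.
Qed.

Section Ops.
Variables (p d : nat) (A : comNzRingType) (M : lmodType A).
Implicit Types (f h : Zpd p d -> M) (x y z : Zpd p d).

Lemma zpd_addA3 x y z : zpd_add (zpd_add x y) z = zpd_add (zpd_add x z) y.
Proof. by apply: funext => j; rewrite /zpd_add zp_addA3. Qed.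

Lemma zpd_basis_add x (i : 'I_d) a b :
  zpd_add (zpd_add x (zpd_basis p i a)) (zpd_basis p i b) = zpd_add x (zpd_basis p i (a + b)).
Proof.
apply: funext => j; rewrite /zpd_add /zpd_basis; case: (j == i); first exact: zp_add_nat.
by rewrite zp_add_nat.
Qed.

Lemma zpd_add0 x (i : 'I_d) : (0 < p)%N -> zpd_add x (zpd_basis p i 0) = x.
Proof. by move=> p0; apply: funext => j; rewrite /zpd_add /zpd_basis if_same zp_add0. Qed.

Lemma subr_swap (V : zmodType) (a b c e : V) : a - b - (c - e) = a - c - (b - e).
Proof. by rewrite !opprB !addrA -[a - b + e]addrAC -[a - c + e]addrAC addrAC. Qed.

Lemma DeltaC y z f : Delta y (Delta z f) = Delta z (Delta y f).
Proof.
apply: funext => x; rewrite /Delta zpd_addA3.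
exact: subr_swap.
Qed.

Lemma iter_comm (D E : (Zpd p d -> M) -> (Zpd p d -> M)) k f :
  (forall g, D (E g) = E (D g)) -> iter k D (E f) = E (iter k D f).
Proof. by move=> H; elim: k => [|k IH] //=; rewrite IH H. Qed.

Lemma iter_iter_comm (D E : (Zpd p d -> M) -> (Zpd p d -> M)) k m f :
  (forall g, D (E g) = E (D g)) -> iter k D (iter m E f) = iter m E (iter k D f).
Proof.
move=> H; elim: m => [|m IH] //=; rewrite -IH iter_comm //.
Qed.

Lemma Delta_pow_Delta n y f : Delta_pow n (Delta y f) = Delta y (Delta_pow n f).
Proof.
rewrite /Delta_pow; elim: (enum 'I_d) => [|j s IH] //=.
by rewrite IH iter_comm // => g; rewrite /Delta_i DeltaC.
Qed.

Definition shiftn (n : 'I_d -> nat) (i : 'I_d) k : 'I_d -> nat :=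
  fun j => (n j + (j == i) * k)%N.
Arguments shiftn : clear implicits.

Lemma Delta_pow_shift n i k f :
  Delta_pow (shiftn n i k) f = iter k (Delta_i i) (Delta_pow n f).
Proof.
rewrite /Delta_pow.
suff H : forall s, foldr (fun j g => iter (shiftn n i k j) (Delta_i j) \o g) id s f =
  iter (k * count_mem i s) (Delta_i i) (foldr (fun j g => iter (n j) (Delta_i j) \o g) id s f).
  by rewrite H count_uniq_mem ?enum_uniq // mem_enum muln1.
elim=> [|j s IH] /=; first by rewrite muln0.
rewrite IH /shiftn; case: eqVneq => [->|ji] /=.
  by rewrite mul1n -!iterD; congr (iter _ _ _); lia.
rewrite mul0n addn0 add0n iter_iter_comm // => g.
by rewrite /Delta_i DeltaC.
Qed.

End Ops.
Arguments shiftn {d} n i k.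

Lemma pascal (V : zmodType) (a : nat -> V) N :
  \sum_(k < N.+1) (a k + a k.+1) *+ 'C(N, k) = \sum_(k < N.+2) a k *+ 'C(N.+1, k).
Proof.
rewrite [RHS]big_ord_recl /=.
under [X in _ = _ + X]eq_bigr => k _ do rewrite /bump /= add1n binS mulrnDr.
rewrite big_split /= addrA; under eq_bigr => k _ do rewrite mulrnDl.
rewrite big_split /=; congr (_ + _).
rewrite big_ord_recl big_ord_recr /= !bin0 bin_small // mulr0n addr0.
by under eq_bigr => k _ do rewrite /bump /= add1n.
Qed.

Section Ops2.
Variables (p d : nat) (A : comNzRingType) (M : lmodType A).
Implicit Types (f h : Zpd p d -> M) (x y z : Zpd p d).

Lemma Delta_binom h (i : 'I_d) x N : (0 < p)%N ->
  h (zpd_add x (zpd_basis p i N)) = \sum_(k < N.+1) iter k (Delta_i i) h x *+ 'C(N, k).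
Proof.
move=> p0; elim: N x => [|N IH] x.
  by rewrite zpd_add0 // big_ord_recl big_ord0 /= addr0 mulr1n.
have -> : zpd_add x (zpd_basis p i N.+1) =
  zpd_add (zpd_add x (zpd_basis p i 1)) (zpd_basis p i N) by rewrite zpd_basis_add.
rewrite IH.
rewrite -(@pascal _ (fun k => iter k (Delta_i i) h x)); apply: eq_bigr => k _; congr (_ *+ _).
by rewrite iterS /Delta_i /Delta addrC subrK.
Qed.

Lemma mahler_Delta f (i : 'I_d) N n : (0 < p)%N ->
  mahler (Delta (zpd_basis p i N) f) n =
  \sum_(k < N) mahler f (shiftn n i k.+1) *+ 'C(N, k.+1).
Proof.
move=> p0; rewrite /mahler Delta_pow_Delta {1}/Delta Delta_binom // big_ord_recl /=.
rewrite bin0 mulr1n addrC addKr; apply: eq_bigr => k _.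
by rewrite Delta_pow_shift.
Qed.

End Ops2.

Local Open Scope ereal_scope.

Set Implicit Arguments.
Section Val.
Variables (A : comNzRingType) (M : lmodType A) (vA : A -> \bar R) (vM : M -> \bar R).
Hypotheses (hvA : ring_valuation vA) (hvM : module_valuation vA vM).

Lemma vA_fin (x : A) : x != 0%R -> vA x = (fine (vA x))%:E.
Proof.
move=> x0; case: hvA => h0 hn _ _; rewrite fineK // fin_numE hn /=.
by apply/eqP => /h0 /eqP; rewrite (negbTE x0).
Qed.

Lemma vM_fin (x : M) : x != 0%R -> vM x = (fine (vM x))%:E.
Proof.
move=> x0; case: hvM => h0 hn _ _; rewrite fineK // fin_numE hn /=.
by apply/eqP => /h0 /eqP; rewrite (negbTE x0).
Qed.

Lemma vA_nat m : vA 1 <= vA m%:R.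
Proof.
case: hvA => h0 _ _ hD; elim: m => [|m IH].
  by rewrite (_ : vA 0%:R = +oo) ?leey //; apply/h0.
rewrite mulrS; apply: le_trans (hD _ _); rewrite le_min lexx IH //.
Qed.

Lemma vA_mul (x y : A) : vA x + vA y <= vA (x * y).
Proof. by case: hvA. Qed.

Lemma vM_scale (r : A) (x : M) : vA r + vM x <= vM (r *: x).
Proof. by case: hvM. Qed.

Lemma vM_natmul (m : nat) (x : M) : vA m%:R + vM x <= vM (x *+ m).
Proof. by rewrite -scaler_nat; apply: vM_scale. Qed.

Lemma vM_sum (I : Type) (r : seq I) (P : pred I) (F : I -> M) B :
  (forall i, P i -> B <= vM (F i)) -> B <= vM (\sum_(i <- r | P i) F i).
Proof.
case: hvM => h0 _ _ hD => H.
apply: (big_ind (fun x => B <= vM x)) => //.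
- by rewrite (_ : vM 0 = +oo) ?leey //; apply/h0.
- by move=> x y Hx Hy; apply: le_trans (hD _ _); rewrite le_min Hx Hy.
Qed.

Lemma vM_sub (C : R) (x y : M) :
  ((C + `|fine (vA (-1))|)%:E <= vM x) -> ((C + `|fine (vA (-1))|)%:E <= vM y) ->
  C%:E <= vM (x - y).
Proof.
case: hvM => _ _ hS hD => Hx Hy.
have cfin : vA (-1) = (fine (vA (-1)))%:E by rewrite vA_fin // oppr_eq0 oner_neq0.
set cm := fine (vA (-1)) in cfin Hx Hy *.
apply: le_trans (hD _ _); rewrite le_min; apply/andP; split.
  apply: le_trans Hx; rewrite lee_fin lerDl //.
rewrite -scaleN1r; apply: le_trans (hS _ _); rewrite cfin.
apply: le_trans (leeD2l _ Hy); rewrite -EFinD lee_fin addrCA.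
have := ler_norm (- cm); rewrite normrN => h; lra.
Qed.

End Val.
Unset Implicit Arguments.

Lemma binom_logn p l k : prime p -> (0 < k)%N -> (k <= p ^ l)%N ->
  (p ^ (l - logn p k) %| 'C(p ^ l, k))%N.
Proof.
move=> pp k0 kle.
have C0 : (0 < 'C(p ^ l, k))%N by rewrite bin_gt0.
have H : (p ^ l %| k * 'C(p ^ l, k))%N.
  by rewrite -(prednK k0) -mul_bin_diag dvdn_mulr.
rewrite pfactor_dvdn // in H; last by rewrite muln_gt0 k0.
rewrite pfactor_dvdn // leq_subLR; by rewrite lognM in H.
Qed.

Lemma logn_le p k : prime p -> (0 < k)%N -> (p ^ logn p k <= k)%N.
Proof. by move=> pp k0; apply: dvdn_leq => //; rewrite pfactor_dvdn. Qed.

Section ValN.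
Variables (A : comNzRingType) (vA : A -> \bar R).
Hypothesis (hvA : ring_valuation vA).

Lemma vA_exp (x : A) (a : R) e : a%:E <= vA x ->
  ((e%:R * a + fine (vA 1))%:E <= vA (x ^+ e)).
Proof.
move=> ha; elim: e => [|e IH].
  by rewrite mul0r add0r expr0 -vA_fin // oner_neq0.
rewrite exprS; apply: le_trans (vA_mul hvA _ _).
apply: le_trans (leeD ha IH); rewrite -EFinD lee_fin -natr1 mulrDl mul1r.
lra.
Qed.

Lemma vA_binom p (pp : prime p) (a : R) l k : a%:E <= vA p%:R ->
  (0 < k)%N -> (k <= p ^ l)%N ->
  (((l - logn p k)%N%:R * a + fine (vA 1) + fine (vA 1))%:E <= vA ('C(p ^ l, k))%:R).
Proof.
move=> ha k0 kle; have := @binom_logn p l k pp k0 kle.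
set e := (l - logn p k)%N; move/divnK => <-.
rewrite natrM natrX; apply: le_trans (vA_mul hvA _ _).
have h1 : (fine (vA 1))%:E <= vA ('C(p ^ l, k) %/ p ^ e)%:R.
  rewrite -vA_fin ?oner_neq0 //; exact: vA_nat.
apply: le_trans (leeD h1 (vA_exp _ _ e ha)); rewrite -EFinD lee_fin; lra.
Qed.

End ValN.

Local Open Scope ring_scope.
Lemma choose_l p (pp : prime p) (P a b c : R) : 0 < P -> 0 < a ->
  exists l, forall k, (0 < k)%N -> (k <= p ^ l)%N ->
    c + 1 - P * k%:R <= (l - logn p k)%N%:R * a + b + b.
Proof.
move=> P0 a0; set K := c + 1 - b - b.
have p1 : (1 < p)%N by apply: prime_gt1.
have p0 : (0 < p)%N by apply: prime_gt0.
set m0 := Num.Def.archi_bound (`|K| / P).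
set L := Num.Def.archi_bound (`|K| / a).
have hm0 : K <= P * (p ^ m0)%N%:R.
  have h1 : `|K| / P < m0%:R by apply: archi_boundP; rewrite divr_ge0 // ltW.
  have h2 : (m0 <= p ^ m0)%N by apply: ltnW; apply: ltn_expl.
  have h3 : m0%:R <= (p ^ m0)%N%:R :> R by rewrite ler_nat.
  rewrite ltr_pdivrMr // in h1.
  apply: le_trans (ler_norm K) _; apply: ltW; apply: lt_le_trans h1 _.
  by rewrite mulrC ler_pM2l.
have hL : K <= L%:R * a.
  have h1 : `|K| / a < L%:R by apply: archi_boundP; rewrite divr_ge0 // ltW.
  rewrite ltr_pdivrMr // in h1.
  by apply: le_trans (ler_norm K) _; apply: ltW.
exists (m0 + L)%N => k k0 kle.
set m := logn p k.
have hk : (p ^ m)%N%:R <= k%:R :> R by rewrite ler_nat; apply: logn_le.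
have Pk : P * (p ^ m)%N%:R <= P * k%:R by rewrite ler_pM2l.
suff : K <= (m0 + L - m)%N%:R * a + P * k%:R.
  rewrite /K => H; move: H; clear; generalize ((m0 + L - m)%:R * a) (P * k%:R) => u v; clear; lra.
case: (leqP m0 m) => hm.
  have : P * (p ^ m0)%N%:R <= P * (p ^ m)%N%:R by rewrite ler_pM2l // ler_nat leq_pexp2l.
  move=> h; apply: le_trans hm0 _; apply: le_trans h _; apply: le_trans Pk _.
  by rewrite lerDr mulr_ge0 // ltW.
have hl : (L <= m0 + L - m)%N by move: hm; clear; lia.
apply: le_trans hL _; apply: le_trans (_ : (m0 + L - m)%N%:R * a <= _).
  by rewrite ler_pM2r // ler_nat.
by rewrite lerDl mulr_ge0 // ?ltW // ler0n.
Qed.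

Lemma zp_trunc_add (p : nat) (u v : ZP p) k :
  zp_trunc (zp_add u v) k = ((zp_trunc u k + zp_trunc v k) %% p ^ k)%N.
Proof. by []. Qed.

Lemma trunc_agree (p d : nat) (x y : Zpd p d) k k' : (k' <= k)%N ->
  (forall j, zp_trunc (y j) k = zp_trunc (x j) k) ->
  forall j, zp_trunc (y j) k' = zp_trunc (x j) k'.
Proof. by move=> kk H j; rewrite -!(@zp_trunc_le _ _ _ _ kk) H. Qed.

Lemma nsize_shift (d : nat) (n : 'I_d -> nat) i k :
  nsize (shiftn n i k) = (nsize n + k)%N.
Proof.
rewrite /nsize /shiftn big_split /=; congr (_ + _)%N.
rewrite (bigD1 i) //= eqxx mul1n big1 ?addn0 // => j /negbTE ->; by rewrite mul0n.
Qed.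

Lemma floor_shift (p d : nat) (lam : R) (n : 'I_d -> nat) i k :
  (floor_sum p lam n + ((p%:R : R) `^ lam) * k%:R - 1 <= floor_sum p lam (shiftn n i k))%R.
Proof.
rewrite /floor_sum (bigD1 i) //= [X in (_ <= X)%R](bigD1 i) //=.
have -> : (\sum_(j < d | j != i) (Num.floor ((p%:R : R) `^ lam * (shiftn n i k j)%:R))%:~R =
   \sum_(j < d | j != i) (Num.floor ((p%:R : R) `^ lam * (n j)%:R))%:~R :> R)%R.
  by apply: eq_bigr => j /negbTE ji; rewrite /shiftn ji mul0n addn0.
rewrite /shiftn eqxx mul1n natrD mulrDr.
set x := ((p%:R : R) `^ lam * (n i)%:R)%R; set y := ((p%:R : R) `^ lam * k%:R)%R.
set S := (\sum_(j < d | j != i) _)%R.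
have h1 := floor_le x.
have h2 := lt_succ_floor (x + y).
rewrite intrD in h2.
lra.
Qed.

Local Open Scope ereal_scope.

Theorem lemma2p6 (p : nat) (pp : prime p) (d : nat)
  (A : comNzRingType) (M : lmodType A)
  (vA : A -> \bar R) (vM : M -> \bar R)
  (hvA : ring_valuation vA) (hvM : module_valuation vA vM)
  (hTate : exists w w' : A, (w * w' = 1)%R /\ 0 < vA w)
  (hp : 0 < vA (p%:R)%R)
  (lam c : R) (hc : (0 < c)%R) :
  exists l : nat, forall f : Zpd p d -> M, lam_an vM lam f ->
    forall i : 'I_d,
      lam_an vM lam (Delta (zpd_basis p i (p ^ l)%N) f) /\
      val_lam vM lam f + c%:E <= val_lam vM lam (Delta (zpd_basis p i (p ^ l)%N) f).
Proof.
have p0 : (0 < p)%N by apply: prime_gt0.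
set P := ((p%:R : R) `^ lam)%R.
have P0 : (0 < P)%R by apply: powR_gt0; rewrite ltr0n.
set b1 := fine (vA 1%R).
have vA1 : vA 1%R = b1%:E by rewrite (vA_fin hvA) // oner_neq0.
have [a [a0 ha]] : exists a : R, (0 < a)%R /\ a%:E <= vA p%:R.
  move: hp; case: (vA p%:R) => [r| |] //.
    by move=> r0; exists r; split.
  by move=> _; exists 1%R; split => //; rewrite leey.
have [l Hl] := @choose_l p pp P a b1 c P0 a0.
exists l => f [fc fdec] i.
set N := (p ^ l)%N.
set g := Delta (zpd_basis p i N) f.
have Mg n : mahler g n = (\sum_(k < N) mahler f (shiftn n i k.+1) *+ 'C(N, k.+1))%R.
  exact: mahler_Delta.
have Cb (k : 'I_N) : (c + 1 - P * k.+1%:R)%:E <= vA ('C(N, k.+1))%:R.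
  have h := @vA_binom A vA hvA p pp a l k.+1 ha (ltn0Sn k) (ltn_ord k).
  apply: le_trans h; rewrite lee_fin; apply: Hl => //; exact: ltn_ord.
have Cb1 (k : nat) : b1%:E <= vA ('C(N, k))%:R by rewrite -vA1; exact: (vA_nat hvA).
split; first split.
- move=> x C.
  set C' := (C + `|fine (vA (-1))|)%R.
  have [k1 Hk1] := fc (zpd_add x (zpd_basis p i N)) C'.
  have [k2 Hk2] := fc x C'.
  exists (maxn k1 k2) => y hy.
  rewrite /g /Delta subr_swap.
  apply: (vM_sub hvA hvM).
    apply: Hk1 => j; rewrite /zpd_add !zp_trunc_add.
    by rewrite (@trunc_agree _ _ x y _ _ (leq_maxl k1 k2) hy).
  by apply: Hk2; apply: (@trunc_agree _ _ x y _ _ (leq_maxr k1 k2) hy).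
- move=> C; have [N0 HN0] := fdec (C - b1)%R.
  exists N0 => n hn; rewrite Mg leeBrDr // -EFinD.
  apply: (vM_sum hvM) => k _; apply: le_trans (vM_natmul hvM _ _).
  have hn' : (N0 <= nsize (shiftn n i k.+1))%N by rewrite nsize_shift (leq_trans hn) // leq_addr.
  have := HN0 _ hn'; rewrite leeBrDr // -EFinD nsize_shift => H.
  apply: le_trans (leeD (Cb1 _) H); rewrite -EFinD lee_fin natrD mulrDr.
  have : (0 <= P * k.+1%:R)%R by rewrite mulr_ge0 // ltW.
  rewrite -/P; lra.
- rewrite /val_lam; apply/ereal_infP => _ [n _ <-].
  rewrite leeBrDr // Mg.
  apply: (vM_sum hvM) => k _; apply: le_trans (vM_natmul hvM _ _).
  have Hf : ereal_inf [set vM (mahler f n0) - (floor_sum p lam n0)%:E | n0 in [set: 'I_d -> nat]]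
      <= vM (mahler f (shiftn n i k.+1)) - (floor_sum p lam (shiftn n i k.+1))%:E.
    by apply: ge_ereal_inf; eexists; first by exists (shiftn n i k.+1).
  rewrite leeBrDr // in Hf.
  apply: le_trans (leeD (Cb k) Hf).
  rewrite -addeA -EFinD addeCA -EFinD; apply: leeD2l; rewrite lee_fin.
  have := @floor_shift p d lam n i k.+1; rewrite -/P.
  lra.
Qed.
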